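(* Let $y_D$ be a real random variable with continuous cumulative distribution function $F$, let $\gamma\in[0.5,1)\cap\mathbb{Q}$ with irreducible fraction $\gamma=\frac{n_1}{n_2}$, and let $\epsilon\in(0,1)$, $\rho\in(0,1)$. Let $z_{\rho/2}$ denote the upper $\frac{\rho}{2}$-quantile of the standard Gaussian distribution. Set $$k=\left\lceil\left(\frac{z_{\rho/2}\sqrt{\gamma-\gamma^2}}{2\epsilon\sqrt{n_2}}+\sqrt{\left(\frac{z_{\rho/2}\sqrt{\gamma-\gamma^2}}{2\epsilon\sqrt{n_2}}\right)^2+\frac{2(\gamma-0.5)z_{\rho/2}^2}{3n_2\epsilon}+\frac{1+\gamma}{3n_2\epsilon}}\right)^2\right\rceil,\qquad N=kn_2,$$ let $y_{D,1},\dots,y_{D,N}$ be i.i.d. copies of $y_D$ with order statistics $y_{D,(1)}\le\dots\le y_{D,(N)}$, and let $\tilde J_D=y_{D,(N\gamma)}$. Assume the following confidence-interval hypothesis for $X\sim\mathrm{Beta}(N\gamma,N+1-N\gamma)$: $$\mathrm{prob}\{\gamma-\epsilon_l\le X\le \gamma+\epsilon_u\}\ge 1-\rho,$$ where $$\epsilon_u=\frac{\sqrt{\gamma-\gamma^2}}{\sqrt N}z_{\rho/2}+\frac{2(0.5-\gamma)z_{\rho/2}^2-1-\gamma}{3N},\qquad \epsilon_l=\frac{\sqrt{\gamma-\gamma^2}}{\sqrt N}z_{\rho/2}-\frac{2(0.5-\gamma)z_{\rho/2}^2-1-\gamma}{3N}.$$ Then $$\mathrm{prob}\{|F(\tilde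 J_D)-\gamma|\le\epsilon\}\ge 1-\rho .$$
   Context: For a finite sample $\{x_i\}_{i=1}^N$, the order statistics $x_{(1)}\le\dots\le x_{(N)}$ are the sample values sorted increasingly. The irreducible fraction of a rational $\gamma$ is $\gamma=n_1/n_2$ with $n_1,n_2$ coprime positive integers. Known fact that may be used: if $y_{D,(m)}$ is the $m$th order statistic of $N$ i.i.d. samples with continuous CDF $F$, then $F(y_{D,(m)})\sim\mathrm{Beta}(m,N+1-m)$. In the paper, the confidence-interval hypothesis on the Beta variable is taken from an asymptotic (normal-approximation) result valid up to terms of order $N^{-3/2}$; here it is stated as an explicit assumption. *)

(* Defs.v *)
From HB Require Import structures.
From mathcomp Require Import all_boot all_order all_algebra.
From mathcomp Require Import all_classical all_reals all_analysis.
Set Implicit Arguments. Unset Strict Implicit. Unset Printing Implicit Defensive.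
Import Order.TTheory GRing.Theory Num.Theory.
Import numFieldNormedType.Exports.
Local Open Scope classical_set_scope.
Local Open Scope ring_scope.

Definition mutually_independent d (T : measurableType d) (R : realType)
  (P : probability T R) (N : nat) (X : 'I_N -> {RV P >-> R}) : Prop :=
  forall (I : {set 'I_N}) (B : 'I_N -> set R),
    (forall i, measurable (B i)) ->
    P (\bigcap_(i in [set j | j \in I]) (X i @^-1` B i)) =
    (\prod_(i in I) P (X i @^-1` B i))%E.

(* m-th order statistic (1-based) of the sample (X_1 w, ..., X_N w). *)
Definition order_stat d (T : measurableType d) (R : realType)
  (P : probability T R) (N : nat) (X : 'I_N -> {RV P >-> R}) (m : nat)
  (w : T) : R :=
  nth 0 (sort <=%R [seq X i w | i <- enum 'I_N]) m.-1.

Definition k_real (R : realType) (gamma eps z : R) (n2 : nat) : R :=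
  let a := z * Num.sqrt (gamma - gamma ^+ 2) / (2 * eps * Num.sqrt n2%:R) in
  (a + Num.sqrt (a ^+ 2 + 2 * (gamma - 2^-1) * z ^+ 2 / (3 * n2%:R * eps)
                 + (1 + gamma) / (3 * n2%:R * eps))) ^+ 2.

Definition eps_u (R : realType) (gamma z : R) (N : nat) : R :=
  Num.sqrt (gamma - gamma ^+ 2) / Num.sqrt N%:R * z
  + (2 * (2^-1 - gamma) * z ^+ 2 - 1 - gamma) / (3 * N%:R).

Definition eps_l (R : realType) (gamma z : R) (N : nat) : R :=
  Num.sqrt (gamma - gamma ^+ 2) / Num.sqrt N%:R * z
  - (2 * (2^-1 - gamma) * z ^+ 2 - 1 - gamma) / (3 * N%:R).

(* Main.v *)
Require Import Defs.
From HB Require Import structures.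
From mathcomp Require Import all_boot all_order all_algebra.
From mathcomp Require Import all_classical all_reals all_analysis.
Import Order.TTheory GRing.Theory Num.Theory.
Import numFieldNormedType.Exports.
Local Open Scope classical_set_scope.
Local Open Scope ring_scope.
From mathcomp Require Import ring lra.


Lemma alg (R : realFieldType) (s z eps u t q D : R) :
  0 < eps -> 0 < u -> 0 < t -> 0 <= q ->
  q ^+ 2 = (z * s / (2 * eps * u)) ^+ 2 + D / (3 * u ^+ 2 * eps) ->
  z * s / (2 * eps * u) + q <= t ->
  s / (t * u) * z + D / (3 * (t ^+ 2 * u ^+ 2)) <= eps.
Proof.
move=> he hu ht hq.
set a := z * s / (2 * eps * u) => hqa hat.
have hzs : z * s = a * (2 * eps * u).
  by rewrite /a mulfVK // !mulf_neq0 ?gt_eqF.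
have hD : D = (q ^+ 2 - a ^+ 2) * (3 * u ^+ 2 * eps).
  by rewrite hqa addrAC subrr add0r mulfVK // !mulf_neq0 ?gt_eqF ?expf_neq0 ?gt_eqF.
have -> : s / (t * u) * z + D / (3 * (t ^+ 2 * u ^+ 2)) =
  (a * 2 * eps * t + (q ^+ 2 - a ^+ 2) * eps) / t ^+ 2.
  rewrite hD mulrAC (mulrC s) hzs.
  field; rewrite ?mulf_neq0 ?gt_eqF ?expf_neq0 ?gt_eqF //.
rewrite ler_pdivrMr ?exprn_gt0 //.
have h1 : q <= t - a by lra.
have h2 : q ^+ 2 <= (t - a) ^+ 2 by rewrite ler_sqr ?nnegrE //; lra.
nra.
Qed.

Theorem theorem2
  (R : realType) (d : measure_display) (T : measurableType d)
  (P : probability T R)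
  (yD : {RV P >-> R}) (F : R -> R)
  (hF : forall r, (F r)%:E = cdf yD r)
  (hFcont : continuous F)
  (n1 n2 : nat) (hn2 : (0 < n2)%N) (hcop : coprime n1 n2)
  (hgam : 2^-1 <= n1%:R / n2%:R :> R) (hgam1 : n1%:R / n2%:R < 1 :> R)
  (eps rho z : R)
  (heps : 0 < eps < 1) (hrho : 0 < rho < 1)
  (hz : normal_prob 0 1 `]z, +oo[ = (rho / 2)%:E)
  (k : nat)
  (hk : (k : int) = Num.ceil (k_real (n1%:R / n2%:R) eps z n2))
  (y : 'I_(k * n2) -> {RV P >-> R})
  (hiid : mutually_independent y)
  (hident : forall i (A : set R), measurable A ->
       distribution P (y i) A = distribution P yD A)
  (* known fact: F(y_(m)) ~ Beta(m, N+1-m), here with m = N*gamma = k*n1 *)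
  (hbeta : forall A : set R, measurable A ->
       P [set w | F (order_stat y (k * n1) w) \in A]
       = beta_prob (k * n1) (k * n2 + 1 - k * n1) A)
  (* confidence-interval hypothesis on X ~ Beta(N*gamma, N+1-N*gamma) *)
  (hCI : ((1 - rho)%:E <=
       beta_prob (k * n1) (k * n2 + 1 - k * n1)
         `[(n1%:R / n2%:R - eps_l (n1%:R / n2%:R) z (k * n2))%R,
           (n1%:R / n2%:R + eps_u (n1%:R / n2%:R) z (k * n2))%R])%E) :
  ((1 - rho)%:E <=
     P [set w | (`|F (order_stat y (k * n1) w) - n1%:R / n2%:R| <= eps)%R])%E.

Proof.
set g := n1%:R / n2%:R.
set N := (k * n2)%N.
have [he0 he1] := andP heps.
have hu : 0 < Num.sqrt (n2%:R : R) by rewrite sqrtr_gt0 ltr0n.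
have hu2 : Num.sqrt (n2%:R : R) ^+ 2 = n2%:R by rewrite sqr_sqrtr ?ler0n.
set u := Num.sqrt (n2%:R : R) in hu hu2.
set s := Num.sqrt (g - g ^+ 2).
set a := z * s / (2 * eps * u).
set D := - (2 * (2^-1 - g) * z ^+ 2 - 1 - g).
have hD : 0 < D.
  rewrite /D; have : 0 <= z ^+ 2 by exact: sqr_ge0.
  move: hgam hgam1; rewrite -/g => h1 h2 hz2; nra.
set b := a ^+ 2 + D / (3 * u ^+ 2 * eps).
have hb : 0 <= b.
  rewrite /b; apply: addr_ge0; first exact: sqr_ge0.
  apply: divr_ge0; first exact: ltW.
  by apply: mulr_ge0; [apply: mulr_ge0 => //; exact: sqr_ge0|exact: ltW].
have hkr : k_real g eps z n2 = (a + Num.sqrt b) ^+ 2.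
  rewrite /k_real -/s -/u -/a /b; congr ((_ + Num.sqrt _) ^+ 2).
  rewrite hu2 /D; field; rewrite ?mulf_neq0 ?gt_eqF ?ltr0n //.
have hq : 0 <= Num.sqrt b by exact: sqrtr_ge0.
have hqb : Num.sqrt b ^+ 2 = b by rewrite sqr_sqrtr.
have hr : 0 < a + Num.sqrt b.
  have hpos : 0 < D / (3 * u ^+ 2 * eps).
    by rewrite divr_gt0 // !mulr_gt0 // exprn_gt0.
  have : a ^+ 2 < Num.sqrt b ^+ 2 by rewrite hqb /b ltrDl.
  move=> h; nra.
have hkge : k_real g eps z n2 <= k%:R.
  have := ceil_ge (k_real g eps z n2).
  by rewrite -hk.
have ht : a + Num.sqrt b <= Num.sqrt (k%:R : R).
  have h := ler_wsqrtr hkge; move: h.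
  by rewrite hkr sqrtr_sqr ger0_norm // ltW.
have ht0 : 0 < Num.sqrt (k%:R : R) by exact: lt_le_trans ht.
have hsN : Num.sqrt (N%:R : R) = Num.sqrt (k%:R : R) * u.
  by rewrite /N natrM sqrtrM ?ler0n.
have hN : (N%:R : R) = Num.sqrt (k%:R : R) ^+ 2 * u ^+ 2.
  by rewrite hu2 sqr_sqrtr ?ler0n // /N natrM.
have hl : eps_l g z N <= eps.
  rewrite /eps_l -/s hsN hN.
  have -> : 2 * (2^-1 - g) * z ^+ 2 - 1 - g = - D by rewrite /D opprK.
  rewrite mulNr opprK.
  exact: (@alg R _ _ _ _ _ _ _ he0 hu ht0 hq hqb ht).
have hul : eps_u g z N <= eps_l g z N.
  rewrite /eps_u /eps_l lerD2l -/D.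
  have -> : 2 * (2^-1 - g) * z ^+ 2 - 1 - g = - D by rewrite /D opprK.
  have hc : 0 < D / (3 * N%:R).
    rewrite hN; apply: divr_gt0 => //.
    by rewrite !mulr_gt0 // exprn_gt0.
  rewrite mulNr opprK; lra.
have hset : [set w | `|F (order_stat y (k * n1) w) - g| <= eps] =
    [set w | F (order_stat y (k * n1) w) \in `[g - eps, g + eps]%classic].
  apply: eq_set => w; rewrite in_setE /= in_itv /= ler_distl //.
rewrite hset hbeta; last exact: measurable_itv.
apply: (le_trans hCI); apply: le_measure.
- by rewrite inE; exact: measurable_itv.
- by rewrite inE; exact: measurable_itv.
move=> x /=; rewrite !in_itv /= => /andP [h1 h2]; apply/andP; split.
  by apply: le_trans h1; rewrite lerD2l lerN2.
by apply: (le_trans h2); rewrite lerD2l; apply: le_trans hul hl.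
Qed.
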